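(* Let $\mathbb{S}$ be a commutative semigroup with unit $0$ and let $T=\{T_s\}_{s\in\mathbb{S}}$ be a CP-semigroup on $\mathcal{B}(H)$. Define linear maps $\widetilde{T}_s$ on $\mathcal{B}(H\oplus\mathbb{C})$ by $\widetilde{T}_0=\mathrm{id}$ and, for $s\neq 0$, $$\widetilde{T}_s\begin{pmatrix} A & h\\ g^* & c\end{pmatrix}=\begin{pmatrix} T_s(A)+c(I-T_s(I)) & 0\\ 0 & c\end{pmatrix},$$ where $A\in\mathcal{B}(H)$, $h,g\in H$, $c\in\mathbb{C}$. Then $\widetilde{T}=\{\widetilde{T}_s\}_{s\in\mathbb{S}}$ is a semigroup of unital completely positive maps, and for all $b\in\mathcal{B}(H)$ and $s\in\mathbb{S}$, $T_s(b)=p_H\widetilde{T}_s(b)p_H$, where $\mathcal{B}(H)$ is identified with the corner $p_H\mathcal{B}(H\oplus\mathbb{C})p_H$ and $p_H$ is the projection onto $H\oplus 0$.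
   Context: A CP-semigroup over $\mathbb{S}$ on a von Neumann algebra $\mathcal{A}$ is a family $T=\{T_s\}_{s\in\mathbb{S}}$ of normal contractive completely positive maps on $\mathcal{A}$ with $T_0=\mathrm{id}_{\mathcal{A}}$ and $T_s\circ T_t=T_{s+t}$ for all $s,t\in\mathbb{S}$. *)

(* Defs.v *)
From HB Require Import structures.
From mathcomp Require Import all_boot all_order all_algebra.
From mathcomp Require Import complex.
From mathcomp Require Import reals.
Set Implicit Arguments. Unset Strict Implicit. Unset Printing Implicit Defensive.
Import Order.TTheory GRing.Theory Num.Theory.
Local Open Scope ring_scope.

Section Hilbert.
Variable R : realType.
Local Notation C := (R[i]).
Variable V : lmodType C.
Variable ip : V -> V -> C.

Definition is_inner_product : Prop :=
  [/\ (forall (a : C) (x y z : V), ip (a *: x + y) z = a * ip x z + ip y z),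
      (forall x y : V, ip y x = Num.conj (ip x y)),
      (forall x : V, 0 <= ip x x) &
      (forall x : V, ip x x = 0 -> x = 0)].

Definition vnorm (x : V) : R := Num.sqrt (complex.Re (ip x x)).

Definition complete_ip : Prop :=
  forall u : nat -> V,
    (forall e : R, 0 < e -> exists N : nat, forall m n : nat,
        (N <= m)%N -> (N <= n)%N -> vnorm (u m - u n) < e) ->
    exists l : V, forall e : R, 0 < e -> exists N : nat, forall n : nat,
        (N <= n)%N -> vnorm (u n - l) < e.

Definition is_hilbert : Prop := is_inner_product /\ complete_ip.

(* bounded linear operators; B(H) = { A : V -> V | is_bop A } *)
Definition op_bounded_by (A : V -> V) (M : R) : Prop :=
  forall x : V, vnorm (A x) <= M * vnorm x.

Definition is_bop (A : V -> V) : Prop :=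
  (forall (a : C) (x y : V), A (a *: x + y) = a *: A x + A y) /\
  exists M : R, op_bounded_by A M.

Definition pos_op (A : V -> V) : Prop := forall x : V, 0 <= ip (A x) x.

Definition pos_opmx (n : nat) (X : 'I_n -> 'I_n -> V -> V) : Prop :=
  forall x : 'I_n -> V, 0 <= \sum_(i < n) \sum_(j < n) ip (X i j (x j)) (x i).

Definition le_op (A B : V -> V) : Prop := pos_op (fun x => B x - A x).

Definition self_adjoint (A : V -> V) : Prop :=
  forall x y : V, ip (A x) y = ip x (A y).

Definition is_lub_op (I : Type) (F : I -> V -> V) (A : V -> V) : Prop :=
  [/\ is_bop A, self_adjoint A, (forall i, le_op (F i) A) &
      (forall B : V -> V, is_bop B -> self_adjoint B ->
         (forall i, le_op (F i) B) -> le_op A B)].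

Definition bop_map (Phi : (V -> V) -> (V -> V)) : Prop :=
  (forall A, is_bop A -> is_bop (Phi A)) /\
  (forall (a : C) (A B : V -> V), is_bop A -> is_bop B ->
     Phi (fun x => a *: A x + B x) = (fun x => a *: Phi A x + Phi B x)).

Definition completely_positive (Phi : (V -> V) -> (V -> V)) : Prop :=
  bop_map Phi /\
  forall (n : nat) (X : 'I_n -> 'I_n -> V -> V),
    (forall i j, is_bop (X i j)) -> pos_opmx X ->
    pos_opmx (fun i j => Phi (X i j)).

Definition contractive (Phi : (V -> V) -> (V -> V)) : Prop :=
  forall (A : V -> V) (M : R), is_bop A -> 0 <= M -> op_bounded_by A M ->
    op_bounded_by (Phi A) M.

Definition normal_map (Phi : (V -> V) -> (V -> V)) : Prop :=
  forall (I : Type) (leI : I -> I -> Prop) (F : I -> V -> V) (A : V -> V),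
    inhabited I ->
    (forall i j, exists k, leI i k /\ leI j k) ->
    (forall i j, leI i j -> le_op (F i) (F j)) ->
    (forall i, is_bop (F i) /\ pos_op (F i)) ->
    is_lub_op F A ->
    is_lub_op (fun i => Phi (F i)) (Phi A).

Definition unital (Phi : (V -> V) -> (V -> V)) : Prop := Phi id = id.

End Hilbert.

Definition cp_semigroup (R : realType) (V : lmodType R[i]) (ip : V -> V -> R[i])
  (S : nmodType) (T : S -> (V -> V) -> (V -> V)) : Prop :=
  [/\ (forall s, normal_map ip (T s)),
      (forall s, contractive ip (T s)),
      (forall s, completely_positive ip (T s)),
      (forall A, is_bop ip A -> T 0 A = A) &
      (forall s t A, is_bop ip A -> T (s + t) A = T s (T t A))].

Definition sumC (R : realType) (V : lmodType R[i]) : lmodType R[i] :=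
  (V * (R[i])^o)%type.

Definition ip_sumC (R : realType) (V : lmodType R[i]) (ip : V -> V -> R[i])
  (w z : sumC V) : R[i] := ip w.1 z.1 + (w.2 : R[i]) * Num.conj (z.2 : R[i]).

(* the dilation \tilde T_s on B(H (+) C):
   X = [[A, h],[g^*, c]] with A = p_H X p_H, c = <X(0,1),(0,1)> *)
Definition Ttilde (R : realType) (V : lmodType R[i]) (S : nmodType)
  (T : S -> (V -> V) -> (V -> V)) (s : S) (X : sumC V -> sumC V) : sumC V -> sumC V :=
  if s == 0 then X else
  let A := fun x : V => (X (x, 0)).1 in
  let c : R[i] := (X (0, 1)).2 in
  fun w => (T s A w.1 + c *: (w.1 - T s id w.1), (c * (w.2 : R[i]) : (R[i])^o)).

(* p_H Y p_H, viewed as an operator on H *)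
Definition compress (R : realType) (V : lmodType R[i]) (Y : sumC V -> sumC V) : V -> V :=
  fun x => (Y (x, 0)).1.

(* Main.v *)
Require Import Defs.
From HB Require Import structures.
From mathcomp Require Import all_boot all_order all_algebra.
From mathcomp Require Import complex.
From mathcomp Require Import reals.
From mathcomp Require Import spectral sesquilinear.
From mathcomp Require Import ring.
From Stdlib Require Import FunctionalExtensionality.
Import Order.TTheory GRing.Theory Num.Theory.
Set Implicit Arguments. Unset Strict Implicit. Unset Printing Implicit Defensive.
Local Open Scope ring_scope.

Module FinM.
Import Num.Def.
Section Fin.
Variable C : numClosedFieldType.

Definition QF n (c : 'I_n -> 'I_n -> C) (z : 'I_n -> C) :=
  \sum_(i < n) \sum_(j < n) c i j * z j * (z i)^*.

Definition BF n (c : 'I_n -> 'I_n -> C) (z w : 'I_n -> C) :=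
  \sum_(i < n) \sum_(j < n) c i j * z j * (w i)^*.

Lemma sum_delta n (F : 'I_n -> C) k : \sum_(i < n) F i * (i == k)%:R = F k.
Proof.
rewrite (bigD1 k) //= eqxx mulr1 big1 ?addr0 // => i /negbTE ->.
by rewrite mulr0.
Qed.

Lemma BF_e n (c : 'I_n -> 'I_n -> C) (i j : 'I_n) :
  BF c (fun b => (b == j)%:R) (fun a => (a == i)%:R) = c i j.
Proof.
rewrite /BF (bigD1 i) //= eqxx conjC1 [X in _ + X]big1 ?addr0.
  rewrite -(sum_delta (fun b => c i b) j) /=.
  by apply: eq_bigr => b _; rewrite mulr1.
move=> a /negbTE ->; rewrite conjC0 big1 // => b _; by rewrite mulr0.
Qed.

Lemma BF_addl n c (z z' w : 'I_n -> C) (u : C) :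
  BF c (fun b => z b + u * z' b) w = BF c z w + u * BF c z' w.
Proof.
rewrite /BF mulr_sumr -big_split; apply: eq_bigr => a _.
rewrite mulr_sumr -big_split; apply: eq_bigr => b _.
by rewrite mulrDr mulrDl; congr (_ + _); rewrite mulrCA !mulrA.
Qed.

Lemma BF_addr n c (z w w' : 'I_n -> C) (u : C) :
  BF c z (fun b => w b + u * w' b) = BF c z w + u^* * BF c z w'.
Proof.
rewrite /BF mulr_sumr -big_split; apply: eq_bigr => a _.
rewrite mulr_sumr -big_split; apply: eq_bigr => b _.
rewrite rmorphD rmorphM mulrDr; congr (_ + _); by rewrite mulrCA.
Qed.

Lemma psd_herm n (c : 'I_n -> 'I_n -> C) :
  (forall z, 0 <= QF c z) -> forall i j, c j i = (c i j)^*.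
Proof.
move=> Hpos i j.
pose e k := fun b : 'I_n => (b == k)%:R : C.
have Qr : forall z, (QF c z)^* = QF c z.
  by move=> z; apply: conj_Creal; apply: ger0_real.
have QE : forall u, QF c (fun b => e i b + u * e j b) =
   c i i + u * c i j + u^* * c j i + u * u^* * c j j.
  move=> u; rewrite /QF -/(BF c _ _) BF_addl !BF_addr !BF_e.
  rewrite mulrDr !addrA mulrA; ring.
have cr : forall k, (c k k)^* = c k k.
  by move=> k; rewrite -(BF_e c k k) -/(QF c (e k)) Qr.
have Ur : forall u, (u * c i j + u^* * c j i)^* = u * c i j + u^* * c j i.
  move=> u; have := Qr (fun b => e i b + u * e j b); rewrite QE.
  rewrite !rmorphD !rmorphM /= !conjCK cr (cr j) => H.
  have -> : u^* * (c i j)^* + u * (c j i)^* =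
    (c i i + u^* * (c i j)^* + u * (c j i)^* + u^* * u * c j j) - c i i - u^* * u * c j j by ring.
  rewrite H; ring.
have H1 := Ur 1; have H2 := Ur 'i.
rewrite !rmorphD !rmorphM /= !rmorph1 !mul1r in H1.
rewrite !rmorphD !rmorphM /= !conjCi rmorphN /= conjCi opprK in H2.
have H2' : (c i j)^* - (c j i)^* = c j i - c i j.
  apply: (mulfI (neq0Ci C)).
  transitivity (- (- 'i * (c i j)^* + 'i * (c j i)^*)); first ring.
  rewrite H2; ring.
have : (c j i - (c i j)^*) *+ 2 = 0.
  have -> : (c j i - (c i j)^*) *+ 2 =
     - (((c i j)^* + (c j i)^* - (c i j + c j i)) + ((c i j)^* - (c j i)^* - (c j i - c i j))).
    ring.
  by rewrite H1 H2' !subrr addr0 oppr0.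
by move/eqP; rewrite mulrn_eq0 /= subr_eq0 => /eqP.
Qed.

Lemma psd_decomp n (c : 'I_n -> 'I_n -> C) :
  (forall z, 0 <= QF c z) -> exists (d : 'I_n -> C) (P : 'M[C]_n),
  (forall k, 0 <= d k) /\ (forall i j, c i j = \sum_(k < n) (P k i)^* * d k * P k j).
Proof.
move=> H.
pose M := \matrix_(i, j) c i j.
have Mh : M \is hermsymmx.
  apply/is_hermitianmxP; rewrite expr0 scale1r; apply/matrixP => i j.
  by rewrite !mxE (psd_herm H i j) conjCK.
have /orthomx_spectralP E := hermitian_normalmx Mh.
set P := spectralmx M in E; set d' := spectral_diag M in E.
have PU : P \is unitarymx by apply: spectral_unitarymx.
rewrite invmx_unitary // in E.
have cE : forall i j, c i j = \sum_(k < n) (P k i)^* * d' 0 k * P k j.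
  move=> i j; have -> : c i j = M i j by rewrite mxE.
  rewrite E mul_mx_diag !mxE; apply: eq_bigr => k _; by rewrite !mxE.
have PP : forall k m, \sum_(a < n) P k a * (P m a)^* = (k == m)%:R.
  move=> k m; move/unitarymxP: PU => /matrixP /(_ k m).
  rewrite !mxE => <-; apply: eq_bigr => a _; by rewrite !mxE.
exists (fun k => d' 0 k), P; split; last exact: cE.
move=> k; have := H (fun b => (P k b)^*).
have -> : QF c (fun b => (P k b)^*) = d' 0 k; last by [].
rewrite /QF.
transitivity (\sum_(a < n) \sum_(b < n) \sum_(m < n)
    d' 0 m * (P k a * (P m a)^*) * (P m b * (P k b)^*)).
  apply: eq_bigr => a _; apply: eq_bigr => b _.
  rewrite cE !mulr_suml; apply: eq_bigr => m _; rewrite conjCK; ring.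
under eq_bigr do rewrite exchange_big.
rewrite exchange_big /=.
transitivity (\sum_(m < n) d' 0 m * (\sum_(a < n) P k a * (P m a)^*) *
                            (\sum_(b < n) P m b * (P k b)^*)).
  apply: eq_bigr => m _; rewrite -mulrA big_distrlr /= mulr_sumr.
  apply: eq_bigr => a _; rewrite mulr_sumr; apply: eq_bigr => b _; ring.
under eq_bigr do rewrite !PP.
rewrite (bigD1 k) //= eqxx mulr1 mulr1 big1 ?addr0 // => m /negbTE.
by rewrite eq_sym => ->; rewrite !mulr0.
Qed.

Section Sesq.
Variable V : lmodType C.
Variable q : V -> V -> C.
Hypothesis qL : forall a x y z, q (a *: x + y) z = a * q x z + q y z.
Hypothesis qR : forall a x y z, q x (a *: y + z) = a^* * q x y + q x z.

Lemma q0l z : q 0 z = 0.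
Proof.
have := qL 1 0 0 z; rewrite scaler0 addr0 mul1r => H.
by apply: (@addrI _ (q 0 z)); rewrite addr0 -H.
Qed.

Lemma q0r z : q z 0 = 0.
Proof.
have := qR 1 z 0 0; rewrite scaler0 addr0 conjC1 mul1r => H.
by apply: (@addrI _ (q z 0)); rewrite addr0 -H.
Qed.

Lemma qsuml n (a : 'I_n -> C) (f : 'I_n -> V) z :
  q (\sum_(j < n) a j *: f j) z = \sum_(j < n) a j * q (f j) z.
Proof.
apply: (big_ind2 (fun x y => q x z = y)); first exact: q0l.
  by move=> x1 x2 y1 y2 <- <-; have := qL 1 x1 y1 z; rewrite scale1r mul1r.
by move=> j _; rewrite -[a j *: f j]addr0 qL q0l addr0.
Qed.

Lemma qsumr n (a : 'I_n -> C) (f : 'I_n -> V) z :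
  q z (\sum_(j < n) a j *: f j) = \sum_(j < n) (a j)^* * q z (f j).
Proof.
apply: (big_ind2 (fun x y => q z x = y)); first exact: q0r.
  by move=> x1 x2 y1 y2 <- <-; have := qR 1 z x1 y1; rewrite scale1r conjC1 mul1r.
by move=> j _; rewrite -[a j *: f j]addr0 qR q0r addr0.
Qed.

Lemma schur n (c : 'I_n -> 'I_n -> C) (y : 'I_n -> V) :
  (forall x, 0 <= q x x) -> (forall z, 0 <= QF c z) ->
  0 <= \sum_(i < n) \sum_(j < n) c i j * q (y j) (y i).
Proof.
move=> qpos /psd_decomp [d [P [dpos cE]]].
pose w k := \sum_(j < n) P k j *: y j.
have -> : \sum_(i < n) \sum_(j < n) c i j * q (y j) (y i) =
          \sum_(k < n) d k * q (w k) (w k).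
  transitivity (\sum_(i < n) \sum_(j < n) \sum_(k < n)
                 d k * ((P k i)^* * (P k j * q (y j) (y i)))).
    apply: eq_bigr => i _; apply: eq_bigr => j _; rewrite cE mulr_suml.
    apply: eq_bigr => k _; ring.
  under eq_bigr do rewrite exchange_big.
  rewrite exchange_big /=; apply: eq_bigr => k _.
  rewrite /w qsumr mulr_sumr; apply: eq_bigr => i _.
  rewrite qsuml !mulr_sumr; apply: eq_bigr => j _. by [].
by apply: sumr_ge0 => k _; apply: mulr_ge0; [apply: dpos | apply: qpos].
Qed.
End Sesq.

End Fin.

End FinM.
Import FinM.

Local Open Scope complex_scope.
Local Open Scope ring_scope.
Section Gen.
Variable R : realType.
Local Notation C := (R[i]).
Variable V : lmodType C.
Variable ip : V -> V -> C.
Hypothesis Hip : is_inner_product ip.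

Lemma ipL a x y z : ip (a *: x + y) z = a * ip x z + ip y z.
Proof. by case: Hip. Qed.
Lemma ipC x y : ip y x = Num.conj (ip x y).
Proof. by case: Hip. Qed.
Lemma ip_ge0 x : 0 <= ip x x.
Proof. by case: Hip. Qed.
Lemma ipR a x y z : ip x (a *: y + z) = Num.conj a * ip x y + ip x z.
Proof. by rewrite ipC ipL rmorphD rmorphM /= -!ipC. Qed.

Lemma ip0l z : ip 0 z = 0.
Proof.
have := ipL 1 0 0 z; rewrite scaler0 addr0 mul1r => H.
by apply: (@addrI _ (ip 0 z)); rewrite addr0 -H.
Qed.
Lemma ip0r z : ip z 0 = 0.
Proof. by rewrite ipC ip0l rmorph0. Qed.
Lemma ipDl x y z : ip (x + y) z = ip x z + ip y z.
Proof. by have := ipL 1 x y z; rewrite scale1r mul1r. Qed.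
Lemma ipDr x y z : ip z (x + y) = ip z x + ip z y.
Proof. by rewrite ipC ipDl rmorphD /= -!ipC. Qed.
Lemma ipZl a x z : ip (a *: x) z = a * ip x z.
Proof. by have := ipL a x 0 z; rewrite addr0 ip0l addr0. Qed.
Lemma ipZr a x z : ip z (a *: x) = Num.conj a * ip z x.
Proof. by rewrite ipC ipZl rmorphM /= -ipC. Qed.
Lemma ipNl x z : ip (- x) z = - ip x z.
Proof. by rewrite -scaleN1r ipZl mulN1r. Qed.
Lemma ipNr x z : ip z (- x) = - ip z x.
Proof. by rewrite -scaleN1r ipZr rmorphN rmorph1 mulN1r. Qed.
Lemma ipBl x y z : ip (x - y) z = ip x z - ip y z.
Proof. by rewrite ipDl ipNl. Qed.
Lemma ipBr x y z : ip z (x - y) = ip z x - ip z y.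
Proof. by rewrite ipDr ipNr. Qed.

Lemma ipRe x : ip x x = (complex.Re (ip x x))%:C.
Proof. by rewrite RRe_real // ger0_real // ip_ge0. Qed.

Lemma ip_par x y : ip (x + y) (x + y) <= 2%:R * ip x x + 2%:R * ip y y.
Proof.
have E : ip (x + y) (x + y) + ip (x - y) (x - y) = 2%:R * ip x x + 2%:R * ip y y.
  rewrite !ipDl !ipDr !ipNl !ipNr; ring.
by rewrite -E lerDl ip_ge0.
Qed.

Definition Cbnd (F : V -> V) (k : C) :=
  0 <= k /\ forall x, ip (F x) (F x) <= k * ip x x.

Lemma bnd_to_C (F : V -> V) M : op_bounded_by ip F M ->
  forall x, ip (F x) (F x) <= (M ^+ 2)%:C * ip x x.
Proof.
move=> H x; rewrite (ipRe (F x)) (ipRe x) -rmorphM /= lecR.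
have := H x; rewrite /vnorm => h.
have s0 : 0 <= Num.sqrt (complex.Re (ip (F x) (F x))) by apply: sqrtr_ge0.
have s1 : 0 <= M * Num.sqrt (complex.Re (ip x x)) by apply: le_trans h.
have := ler_pM s0 s0 h h.
rewrite -expr2 sqr_sqrtr; last by rewrite -lecR -ipRe ip_ge0.
rewrite mulrACA -expr2 -expr2 sqr_sqrtr //; by rewrite -lecR -ipRe ip_ge0.
Qed.

Lemma C_to_bnd (F : V -> V) k : Cbnd F k ->
  op_bounded_by ip F (Num.sqrt (complex.Re k)).
Proof.
move=> [k0 H] x; rewrite /vnorm.
have kr : k = (complex.Re k)%:C by rewrite RRe_real // ger0_real.
have k0' : 0 <= complex.Re k by rewrite -lecR -kr.
rewrite -sqrtrM // ler_sqrt; last by apply: mulr_ge0 => //; rewrite -lecR -ipRe ip_ge0.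
by rewrite -lecR rmorphM /= -kr -!ipRe H.
Qed.

Lemma bop_Cbnd F : is_bop ip F -> exists k, Cbnd F k.
Proof.
move=> [_ [M HM]]; exists (M ^+ 2)%:C; split; first by rewrite lecR sqr_ge0.
exact: bnd_to_C.
Qed.

Lemma Cbnd_bop F k : (forall a x y, F (a *: x + y) = a *: F x + F y) -> Cbnd F k ->
  is_bop ip F.
Proof. by move=> HL Hk; split => //; exists (Num.sqrt (complex.Re k)); apply: C_to_bnd. Qed.

Lemma bop_lin F : is_bop ip F -> forall a x y, F (a *: x + y) = a *: F x + F y.
Proof. by case. Qed.

Lemma bop0 F : is_bop ip F -> F 0 = 0.
Proof.
move=> /bop_lin H; have := H 1 0 0; rewrite scaler0 addr0 scale1r => E.
by apply: (@addrI _ (F 0)); rewrite addr0 -E.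
Qed.

Lemma ipZZ a x : ip (a *: x) (a *: x) = a * Num.conj a * ip x x.
Proof. by rewrite ipZl ipZr mulrA. Qed.

Lemma bop_id : is_bop ip id.
Proof.
apply: (@Cbnd_bop _ 1) => //; split => // x; by rewrite mul1r.
Qed.

Lemma bop_comb a F G : is_bop ip F -> is_bop ip G ->
  is_bop ip (fun x => a *: F x + G x).
Proof.
move=> hF hG.
have [kF [kF0 HF]] := bop_Cbnd hF; have [kG [kG0 HG]] := bop_Cbnd hG.
apply: (@Cbnd_bop _ (2%:R * (a * Num.conj a * kF) + 2%:R * kG)).
  move=> b x y; rewrite !(bop_lin hF) !(bop_lin hG).
  rewrite !scalerDr !scalerA [a * b]mulrC; rewrite -!addrA; congr (_ + _).
  by rewrite addrCA.
split.
  by apply: addr_ge0; apply: mulr_ge0 => //; apply: mulr_ge0 => //; apply: mul_conjC_ge0.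
move=> x; apply: (le_trans (ip_par _ _)); rewrite ipZZ [in X in _ <= X]mulrDl.
have aa : 0 <= a * Num.conj a by apply: mul_conjC_ge0.
have h1 : 2%:R * (a * Num.conj a * ip (F x) (F x)) <= 2%:R * (a * Num.conj a * (kF * ip x x)).
  apply: ler_wpM2l => //; apply: ler_wpM2l => //; exact: HF.
have h2 : 2%:R * ip (G x) (G x) <= 2%:R * (kG * ip x x).
  apply: ler_wpM2l => //; exact: HG.

by apply: le_trans (lerD h1 h2) _; rewrite !mulrA.
Qed.
End Gen.

Section Main.
Variable R : realType.
Local Notation C := (R[i]).
Variable V : lmodType C.
Variable ip : V -> V -> C.
Hypothesis Hip : is_inner_product ip.

Lemma scaleCE (a b : C) : (a *: (b : C^o)) = a * b.
Proof. by []. Qed.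

Lemma lin_rearr (a c1 c2 : C) (P Q D : V) :
  a *: P + Q + (a * c1 + c2) *: D = a *: (P + c1 *: D) + (Q + c2 *: D).
Proof. by rewrite scalerDl -scalerA scalerDr addrACA. Qed.

Lemma pair_eq (u u' : V) (v v' : C) : u = u' -> v = v' ->
  ((u, v : C^o) : sumC V) = (u', v').
Proof. by move=> -> ->. Qed.

Lemma sumC_ip : is_inner_product (ip_sumC ip).
Proof.
split.
- move=> a x y z; rewrite /ip_sumC /= (ipL Hip).
  change (a *: x.2) with (a * (x.2 : C)); ring.
- move=> x y; rewrite /ip_sumC rmorphD rmorphM /= -(ipC Hip) conjCK; ring.
- by move=> x; apply: addr_ge0; [apply: (ip_ge0 Hip) | apply: mul_conjC_ge0].
- case=> x1 x2; rewrite /ip_sumC /= => /eqP.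
  rewrite paddr_eq0; [|exact: (ip_ge0 Hip)|exact: mul_conjC_ge0].
  case/andP => /eqP h1 /eqP h2.
  have -> : x1 = 0 by case: Hip => _ _ _; apply.
  have -> : x2 = 0 by apply/eqP; rewrite -mul_conjC_eq0 h2.
  by [].
Qed.

Local Notation ips := (ip_sumC ip).

Lemma compress_bop X : is_bop ips X -> is_bop ip (fun x => (X (x, 0)).1).
Proof.
move=> hX; have [k [k0 Hk]] := bop_Cbnd sumC_ip hX.
apply: (@Cbnd_bop _ _ _ Hip _ k).
  move=> a x y; have -> : ((a *: x + y, 0 : C^o) : sumC V) = a *: (x, 0 : C^o) + (y, 0 : C^o).
    by apply: pair_eq => //; rewrite /= ?mulr0 ?scaler0 addr0.
  by rewrite (bop_lin hX).
split => // x.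
have E : ips ((x, 0 : C^o) : sumC V) (x, 0 : C^o) = ip x x.
  by rewrite /ip_sumC /= rmorph0 mulr0 addr0.
rewrite -E; apply: le_trans (Hk _); rewrite /ip_sumC lerDl; exact: mul_conjC_ge0.
Qed.

Lemma diag_bop F (c : C) : is_bop ip F ->
  is_bop ips (fun w : sumC V => (F w.1, (c * w.2 : C^o))).
Proof.
move=> hF; have [k [k0 Hk]] := bop_Cbnd Hip hF.
apply: (@Cbnd_bop _ _ _ sumC_ip _ (k + c * Num.conj c)).
  move=> a w z; apply: pair_eq; first by rewrite /= (bop_lin hF).
  rewrite /= !scaleCE; ring.
have cc : 0 <= c * Num.conj c by apply: mul_conjC_ge0.
split; first by apply: addr_ge0.
move=> w; rewrite /ip_sumC /= mulrDl !mulrDr.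
have A0 := ip_ge0 Hip w.1; have B0 : 0 <= w.2 * Num.conj w.2 by apply: mul_conjC_ge0.
have h1 : ip (F w.1) (F w.1) <= k * ip w.1 w.1 + k * (w.2 * Num.conj w.2).
  apply: le_trans (Hk _) _; rewrite lerDl; exact: mulr_ge0.
have h2 : c * w.2 * Num.conj (c * w.2) <= c * Num.conj c * ip w.1 w.1 + c * Num.conj c * (w.2 * Num.conj w.2).
  rewrite rmorphM /= (_ : c * w.2 * (Num.conj c * Num.conj w.2) = c * Num.conj c * (w.2 * Num.conj w.2)); last by ring.
  rewrite lerDr; exact: mulr_ge0.
exact: lerD h1 h2.
Qed.

Lemma bop_ext F G : F =1 G -> is_bop ip F -> is_bop ip G.
Proof. by move=> /functional_extensionality ->. Qed.

Lemma bop_zero : is_bop ip (fun _ => 0).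
Proof.
apply: (@Cbnd_bop _ _ _ Hip _ 0).
  by move=> a x y; rewrite scaler0 addr0.
split => // x; by rewrite (ip0l Hip) mul0r.
Qed.

Variables (S : nmodType) (T : S -> (V -> V) -> (V -> V)).
Hypothesis Tcon : forall s, contractive ip (T s).
Hypothesis Tcp : forall s, completely_positive ip (T s).
Hypothesis T0 : forall A, is_bop ip A -> T 0 A = A.
Hypothesis TST : forall s t A, is_bop ip A -> T (s + t) A = T s (T t A).
Hypothesis Hs0 : forall s t : S, s + t = 0 -> s = 0.

Lemma Tbop s A : is_bop ip A -> is_bop ip (T s A).
Proof. by case: (Tcp s) => -[h _] _; apply: h. Qed.

Lemma Tlin s a A B : is_bop ip A -> is_bop ip B ->
  T s (fun x => a *: A x + B x) = (fun x => a *: T s A x + T s B x).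
Proof. by case: (Tcp s) => -[_ h] _; apply: h. Qed.

Lemma Tzero s : T s (fun _ => 0) = (fun _ => 0).
Proof.
have := Tlin s 1 bop_zero bop_zero.
have -> : (fun _ : V => 1 *: (0 : V) + 0) = (fun _ => 0).
  by apply: functional_extensionality => x; rewrite scaler0 addr0.
move=> E; apply: functional_extensionality => x.
move: (congr1 (fun f => f x) E) => /= E'; rewrite scale1r in E'.
by apply: (@addrI _ (T s (fun _ => 0) x)); rewrite addr0 -E'.
Qed.

Lemma Tscale s a B : is_bop ip B -> T s (fun x => a *: B x) = (fun x => a *: T s B x).
Proof.
move=> hB; have := Tlin s a hB bop_zero; rewrite Tzero.
have -> : (fun x => a *: B x + 0) = (fun x => a *: B x).
  by apply: functional_extensionality => x; rewrite addr0.
move=> ->; apply: functional_extensionality => x; by rewrite addr0.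
Qed.

Lemma T_comb3 s A B c : is_bop ip A -> is_bop ip B ->
  T s (fun x => A x + c *: (x - B x)) = (fun x => T s A x + c *: (T s id x - T s B x)).
Proof.
move=> hA hB.
have -> : (fun x => A x + c *: (x - B x)) =
   (fun x => 1 *: A x + (fun y => c *: id y + (fun z => (- c) *: B z) y) x).
  by apply: functional_extensionality => x; rewrite scale1r scalerBr scaleNr.
have hB' : is_bop ip (fun z => (- c) *: B z).
  by apply: (bop_ext (G := fun z => (- c) *: B z) _ (bop_comb Hip (- c) hB bop_zero)) => z; rewrite addr0.
have hC : is_bop ip (fun y => c *: id y + (fun z => (- c) *: B z) y).
  refine (bop_comb Hip c (bop_id Hip) hB').
rewrite Tlin // Tlin //; last exact: bop_id.
rewrite Tscale //; apply: functional_extensionality => x.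
by rewrite scale1r scalerBr scaleNr.
Qed.

Local Notation TT := (Ttilde T).

Lemma Ttilde0 X : TT 0 X = X.
Proof. by rewrite /Ttilde eqxx. Qed.

Lemma Ttilde_eq s X : s != 0 -> TT s X =
  (fun w : sumC V => (T s (fun x => (X (x, 0)).1) w.1 + (X (0, 1)).2 *: (w.1 - T s id w.1),
                     ((X (0, 1)).2 * w.2 : C^o))).
Proof. by move=> sn; rewrite /Ttilde (negbTE sn). Qed.

Lemma Ttilde_bop s X : is_bop ips X -> is_bop ips (TT s X).
Proof.
move=> hX; case: (eqVneq s 0) => [->|sn]; first by rewrite Ttilde0.
rewrite Ttilde_eq //.
apply: (diag_bop (F := fun x => T s (fun x => (X (x, 0)).1) x + (X (0, 1)).2 *: (x - T s id x))).
have hA := Tbop s (compress_bop hX); have hI := Tbop s (bop_id Hip).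
set c := (X (0, 1)).2.
apply: (bop_ext _ (bop_comb Hip 1 hA (bop_comb Hip c (bop_id Hip) (bop_comb Hip (- c) hI bop_zero)))).
by move=> x /=; rewrite scale1r addr0 scaleNr scalerBr.
Qed.

Lemma Ttilde_lin s a X Y : is_bop ips X -> is_bop ips Y ->
  TT s (fun w => a *: X w + Y w) = (fun w => a *: TT s X w + TT s Y w).
Proof.
move=> hX hY; case: (eqVneq s 0) => [->|sn]; first by rewrite !Ttilde0.
rewrite !Ttilde_eq //=.
rewrite (Tlin s a (compress_bop hX) (compress_bop hY)).
apply: functional_extensionality => w; apply: pair_eq.
  exact: lin_rearr.
by rewrite /= !scaleCE; ring.
Qed.

Lemma X0z X (z : C) : is_bop ips X -> (X (0, z : C^o)).2 = z * (X (0, 1)).2.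
Proof.
move=> hX.
have -> : ((0, z : C^o) : sumC V) = z *: ((0, 1 : C^o) : sumC V) + 0.
  by apply: pair_eq; rewrite /= ?scaler0 ?addr0 // scaleCE mulr1.
by rewrite (bop_lin hX) (bop0 hX) addr0.
Qed.

Lemma TI_pos s v : 0 <= ip (T s id v) v.
Proof.
have P1 : pos_opmx ip (fun (_ _ : 'I_1) => @id V).
  by move=> y; rewrite !big_ord1; apply: (ip_ge0 Hip).
case: (Tcp s) => _ /(_ 1 _ (fun _ _ => bop_id Hip) P1 (fun _ => v)).
by rewrite !big_ord1.
Qed.

Lemma TI_le s v : ip (T s id v) (T s id v) <= ip v v.
Proof.
have hb : op_bounded_by ip (T s id) 1.
  apply: (Tcon s (bop_id Hip)) => // x; by rewrite mul1r.
have := bnd_to_C Hip hb v; rewrite expr1n.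
by rewrite (_ : ((1 : R)%:C) = 1) // mul1r.
Qed.

Lemma D_pos s v : 0 <= ip (v - T s id v) v.
Proof.
set w := T s id v; set r := ip w v.
have rr : ip v w = r by rewrite /r (ipC Hip w v) conj_Creal // ger0_real // TI_pos.
have h : 0 <= (ip v v - r) *+ 2.
  apply: le_trans (ip_ge0 Hip (v - w)) _.
  rewrite (ipBl Hip) !(ipBr Hip) rr -/r.
  have -> : ip v v - r - (r - ip w w) = (ip v v - r) *+ 2 - (ip v v - ip w w) by ring.
  by rewrite gerBl subr_ge0 TI_le.
by rewrite (ipBl Hip) -/w -/r -(pmulrn_lge0 _ (isT : (0 < 2)%N)).
Qed.

Lemma Ttilde_pos s n (X : 'I_n -> 'I_n -> sumC V -> sumC V) : s != 0 ->
  (forall i j, is_bop ips (X i j)) -> pos_opmx ips X ->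
  pos_opmx ips (fun i j => TT s (X i j)).
Proof.
move=> sn hX hpos x.
pose c := fun i j => ((X i j) (0, 1 : C^o)).2.
pose A := fun i j => (fun y => ((X i j) (y, 0 : C^o)).1).
pose D := fun y => y - T s id y.
have hD : is_bop ip D.
  apply: (bop_ext _ (bop_comb Hip (-1) (Tbop s (bop_id Hip)) (bop_id Hip))).
  by move=> y; rewrite scaleN1r addrC.
have E : forall i j, ips (TT s (X i j) (x j)) (x i) =
   ip (T s (A i j) (x j).1) (x i).1 + c i j * ip (D (x j).1) (x i).1
     + c i j * (x j).2 * Num.conj (x i).2.
  move=> i j; rewrite Ttilde_eq // /ip_sumC /= (ipDl Hip) (ipZl Hip).
  by rewrite /c /D /A -mulrA.
under eq_bigr do under eq_bigr do rewrite E.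
under eq_bigr do rewrite !big_split.
rewrite !big_split /=.
have cpsd : forall z, 0 <= QF c z.
  move=> z; have := hpos (fun i => (0, z i : C^o)).
  congr (0 <= _); apply: eq_bigr => i _; apply: eq_bigr => j _.
  rewrite /ip_sumC /= (ip0r Hip) add0r X0z //; ring.
apply: addr_ge0; first apply: addr_ge0.
- case: (Tcp s) => _ /(_ n A) H; apply: (H _ _ (fun i => (x i).1)).
    by move=> i j; apply: compress_bop.
  move=> y; have := hpos (fun i => (y i, 0 : C^o)).
  congr (0 <= _); apply: eq_bigr => i _; apply: eq_bigr => j _.
  by rewrite /ip_sumC /= rmorph0 mulr0 addr0.
- apply: (schur (q := fun u v => ip (D u) v)) => //.
  + move=> a y1 y2 z; by rewrite (bop_lin hD) (ipL Hip).
  + move=> a y1 y2 z; exact: (ipR Hip).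
  + move=> y; exact: D_pos.
- exact: (cpsd (fun i => (x i).2)).
Qed.

Lemma Ttilde_cp s : completely_positive ips (TT s).
Proof.
split; first split.
- by move=> X hX; apply: Ttilde_bop.
- by move=> a X Y hX hY; apply: Ttilde_lin.
move=> n X hX hpos; case: (eqVneq s 0) => [->|sn].
  by rewrite /Ttilde eqxx.
exact: Ttilde_pos.
Qed.

Lemma Ttilde_unital s : unital (TT s).
Proof.
rewrite /unital; case: (eqVneq s 0) => [->|sn]; first by rewrite Ttilde0.
rewrite Ttilde_eq //; apply: functional_extensionality => -[w1 w2].
apply: pair_eq; rewrite /=; last by rewrite mul1r.
by rewrite scale1r subrKC.
Qed.

Lemma Ttilde_sg s t X : is_bop ips X -> TT (s + t) X = TT s (TT t X).
Proof.
move=> hX.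
case: (eqVneq s 0) => [->|sn]; first by rewrite add0r Ttilde0.
case: (eqVneq t 0) => [->|tn]; first by rewrite addr0 Ttilde0.
have st : s + t != 0.
  by apply/eqP => /Hs0 /eqP; rewrite (negbTE sn).
have hA := compress_bop hX.
rewrite (Ttilde_eq _ st) (Ttilde_eq _ tn) (Ttilde_eq _ sn) /=.
rewrite T_comb3 //; last exact: Tbop (bop_id Hip).
  2: exact: Tbop.
apply: functional_extensionality => w; apply: pair_eq; rewrite /=; last by rewrite mulr1.
rewrite !TST //; last exact: bop_id.
rewrite mulr1 -addrA; congr (_ + _).
rewrite -scalerDr; congr (_ *: _); rewrite addrCA; congr (_ + _).
by rewrite addrC addKr.
Qed.

Lemma Ttilde_compress s b : is_bop ip b ->
  T s b = compress (TT s (fun w : sumC V => (b w.1, 0 : C^o))).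
Proof.
move=> hb; case: (eqVneq s 0) => [->|sn]; first by rewrite Ttilde0 T0.
rewrite Ttilde_eq //; apply: functional_extensionality => x.
by rewrite /compress /= scale0r addr0.
Qed.

End Main.

Theorem proposition2p1 (R : realType) (V : lmodType R[i]) (ip : V -> V -> R[i])
  (S : nmodType) (T : S -> (V -> V) -> (V -> V)) :
  is_hilbert ip ->
  (forall s t : S, s + t = 0 -> s = 0) ->
  cp_semigroup ip T ->
  [/\ (forall s : S, completely_positive (ip_sumC ip) (Ttilde T s)
                     /\ unital (Ttilde T s)),
      Ttilde T 0 = id,
      (forall (s t : S) (X : sumC V -> sumC V), is_bop (ip_sumC ip) X ->
         Ttilde T (s + t) X = Ttilde T s (Ttilde T t X)) &
      (forall (s : S) (b : V -> V), is_bop ip b ->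
         T s b = compress (Ttilde T s (fun w : sumC V => (b w.1, 0 : (R[i])^o))))].
Proof.
move=> [Hip _] Hs0 [_ Tcon Tcp T0 TST].
split.
- move=> s; split; [exact: (Ttilde_cp Hip Tcon Tcp) | exact: Ttilde_unital].
- apply: functional_extensionality => X; exact: Ttilde0.
- move=> s t X hX; exact: (Ttilde_sg Hip Tcp TST Hs0).
- move=> s b hb; exact: (Ttilde_compress T0).
Qed.
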